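(* Let $\Delta=\prod_{1\le i<j\le n}(x_i-x_j)$ and for $n-1\ge m_1>\dots>m_k\ge1$ let $\omega_{m_1,\dots,m_k}=d_{m_1}\cdots d_{m_k}\Delta$. Then the set \[ \{\omega_{m_1,\dots,m_k}\mid n-1\ge m_1>\dots>m_k\ge1,\ k=1,\dots,n-1\}\cup\{\Delta\} \] is linearly independent in $\mathbb{R}[x_1,\dots,x_n]\otimes\wedge\mathbb{R}^n$.
   Context: With $\partial_i=\partial/\partial x_i$, $d_j(h\,dx_{i_1}\wedge\cdots\wedge dx_{i_k})=\sum_{l=1}^n(\partial_l^jh)\,dx_l\wedge dx_{i_1}\wedge\cdots\wedge dx_{i_k}$, extended linearly. *)

(* Defs.v *)
From HB Require Import structures.
From mathcomp Require Import all_boot all_order all_algebra.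
From mathcomp Require Import reals.
From mathcomp Require Import mpoly.
Set Implicit Arguments. Unset Strict Implicit. Unset Printing Implicit Defensive.
Import Order.TTheory GRing.Theory Num.Theory.
Local Open Scope ring_scope.

(* Elements of R[x_1..x_n] (x) /\ R^n: the coefficient of the basis element
   dx_I := dx_{i_1} /\ ... /\ dx_{i_k} (i_1 < ... < i_k, I = {i_1,..,i_k}). *)
Definition form (R : realType) (n : nat) := {ffun {set 'I_n} -> {mpoly R[n]}}.

(* dx_l /\ dx_I = (-1)^#{i in I | i < l} dx_(l |: I) when l \notin I, else 0 *)
Definition wsign (R : realType) (n : nat) (l : 'I_n) (I : {set 'I_n}) : R :=
  (-1) ^+ #|[set i in I | (i < l)%N]|.

(* d_j (h dx_I) = sum_l (partial_l^j h) dx_l /\ dx_I, extended linearly *)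
Definition dj (R : realType) (n : nat) (j : nat) (w : form R n) : form R n :=
  [ffun J : {set 'I_n} =>
     \sum_(I : {set 'I_n}) \sum_(l : 'I_n | (l \notin I) && (l |: I == J))
        wsign R l I *: iter j (mderiv l) (w I)].

Definition Delta_poly (R : realType) (n : nat) : {mpoly R[n]} :=
  \prod_(i < n) \prod_(j < n | (i < j)%N) ('X_i - 'X_j).

Definition Delta (R : realType) (n : nat) : form R n :=
  [ffun I : {set 'I_n} => if I == set0 then Delta_poly R n else 0].

Definition omega (R : realType) (n : nat) (s : seq nat) : form R n :=
  foldr (fun m w => dj m w) (Delta R n) s.

Definition admissible (n : nat) (s : seq nat) : bool :=
  sorted (fun a b => b < a)%N s && all (fun m => (1 <= m <= n.-1)%N) s.

(* Main.v *)
Require Import Defs.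
From HB Require Import structures.
From mathcomp Require Import all_boot all_order all_algebra all_fingroup.
From mathcomp Require Import reals.
From mathcomp Require Import mpoly.
Import Order.TTheory GRing.Theory Num.Theory.
Set Implicit Arguments. Unset Strict Implicit. Unset Printing Implicit Defensive.
Local Open Scope ring_scope.

Definition monoS (n : nat) (s : 'S_n) : 'X_{1..n} :=
  [multinom (val ((s^-1)%g j)) | j < n].

Definition eps (R : realType) (n : nat) : R := \prod_(i < n) (-1) ^+ i.

Lemma Delta_polyE (R : realType) (n : nat) :
  Delta_poly R n = \sum_(s : 'S_n) (((-1) ^+ s * eps R n) *: 'X_[monoS s]).
Proof.
pose a : 'rV[{mpoly R[n]}]_n := \row_j (- 'X_j).
have -> : Delta_poly R n = \det (Vandermonde n a).
  rewrite det_Vandermonde /Delta_poly; apply: eq_bigr => i _.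
  by apply: eq_bigr => j _; rewrite !mxE opprK addrC.
rewrite /determinant; apply: eq_bigr => s _.
rewrite -mul_mpolyC rmorphM /= rmorph_sign rmorph_prod /=.
rewrite -mulrA; congr (_ * _).
rewrite (@mpolyXE _ _ s) -big_split /=; apply: eq_bigr => i _.
rewrite !mxE exprNn expr1n mulr1 rmorph_sign mnmE permK.
by rewrite [LHS]exprNn.
Qed.

Definition D (R : realType) (n : nat) (e : 'X_{1..n}) : R := (Delta_poly R n)@_e.

Lemma DE (R : realType) (n : nat) (e : 'X_{1..n}) :
  D R e = \sum_(s : 'S_n) ((-1) ^+ s * eps R n) * (monoS s == e)%:R.
Proof.
rewrite /D Delta_polyE raddf_sum; apply: eq_bigr => s _.
by apply: (etrans (mcoeffZ _ _ _)); rewrite mcoeffX.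
Qed.

Lemma eps_neq0 (R : realType) (n : nat) : eps R n != 0.
Proof. by apply/prodf_neq0 => i _; rewrite signr_eq0. Qed.

Lemma monoS_inj (n : nat) : injective (@monoS n).
Proof.
move=> s t /mnmP H; apply: invg_inj; apply/permP => j.
by apply: val_inj; have := H j; rewrite !mnmE.
Qed.

Lemma Dnz (R : realType) (n : nat) (t : 'S_n) : D R (monoS t) != 0.
Proof.
rewrite DE (bigD1 t) //= eqxx mulr1 big1 ?addr0.
  by rewrite mulf_neq0 ?signr_eq0 ?eps_neq0.
by move=> s st; rewrite (inj_eq (@monoS_inj n)) (negbTE st) mulr0.
Qed.

Lemma Dex (R : realType) (n : nat) (e : 'X_{1..n}) :
  D R e != 0 -> exists s, e = monoS s.
Proof.
rewrite DE => H; case: (pickP (fun s => monoS s == e)) => [s /eqP <-|H0].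
  by exists s.
move: H; rewrite big1 ?eqxx // => s _.
by rewrite H0 mulr0.
Qed.

Definition mperm (n : nat) (t : 'S_n) (e : 'X_{1..n}) : 'X_{1..n} :=
  [multinom e (t i) | i < n].

Lemma Dswap (R : realType) (n : nat) (a b : 'I_n) (e : 'X_{1..n}) :
  a != b -> D R (mperm (tperm a b) e) = - D R e.
Proof.
move=> ab; rewrite !DE (reindex_inj (mulIg (tperm a b))) /=.
rewrite -sumrN; apply: eq_bigr => s _.
rewrite odd_permM odd_tperm ab signr_addb /= expr1 mulrN1 !mulNr.
congr (- (_ * _%:R)); congr (nat_of_bool _).
apply/idP/idP => /eqP H; apply/eqP.
  apply/mnmP => i; have := congr1 (fun m : 'X_{1..n} => m (tperm a b i)) H.
  by rewrite /= !mnmE tpermK invMg tpermV permM tpermK.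
by rewrite -H; apply/mnmP => i; rewrite !mnmE invMg tpermV permM.
Qed.

Definition rk (n : nat) (J : {set 'I_n}) (i : 'I_n) : nat := #|[set j in J | (j < i)%N]|.

Definition pl (n : nat) (J : {set 'I_n}) (v : nat -> nat) (g : 'X_{1..n}) : 'X_{1..n} :=
  [multinom (if i \in J then v (rk J i) else g i) | i < n].

Definition upd (n : nat) (g : 'X_{1..n}) (x : 'I_n) (m : nat) : 'X_{1..n} :=
  [multinom (if i == x then m else g i) | i < n].

Definition hv (s : seq nat) (m p q : nat) : nat :=
  if (q < p)%N then nth 0%N s q else if q == p then m else nth 0%N s q.-1.

Lemma rk_lt (n : nat) (J : {set 'I_n}) (i j : 'I_n) :
  i \in J -> (i < j)%N -> (rk J i < rk J j)%N.
Proof.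
move=> iJ ij; apply: proper_card; apply/properP; split.
  apply/subsetP => k; rewrite !inE => /andP [-> ki] /=.
  exact: ltn_trans ki ij.
by exists i; rewrite !inE ?iJ ?ij // ltnn.
Qed.

Lemma rk_neq (n : nat) (J : {set 'I_n}) (i j : 'I_n) :
  i \in J -> j \in J -> i != j -> rk J i != rk J j.
Proof.
move=> iJ jJ ij; case: (ltngtP i j) => [h|h|h].
- by rewrite neq_ltn rk_lt.
- by rewrite neq_ltn orbC rk_lt.
- by move: ij; rewrite (val_inj h) eqxx.
Qed.

Lemma rk_bound (n : nat) (J : {set 'I_n}) (i : 'I_n) :
  i \in J -> (rk J i < #|J|)%N.
Proof.
move=> iJ; apply: proper_card; apply/properP; split.
  by apply/subsetP => k; rewrite !inE => /andP [].
by exists i => //; rewrite !inE ltnn andbF.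
Qed.

Lemma rkD1 (n : nat) (J : {set 'I_n}) (x i : 'I_n) :
  x \in J -> rk J i = ((x < i)%N + rk (J :\ x) i)%N.
Proof.
move=> xJ; rewrite /rk (cardsD1 x) inE xJ /=; congr (_ + _)%N.
by apply: eq_card => j; rewrite !inE andbA.
Qed.

Lemma rk_pred (n : nat) (J : {set 'I_n}) (x : 'I_n) (r : nat) :
  x \in J -> rk J x = r.+1 -> exists y, [/\ y \in J, (y < x)%N & rk J y = r].
Proof.
move=> xJ rx.
have : [set j in J | (j < x)%N] != set0.
  by apply/eqP => h; move: rx; rewrite /rk h cards0.
case/set0Pn => j0 j0S.
pose y := [arg max_(j > j0 in [set j in J | (j < x)%N]) (j : nat)].
have [yS ymax] : y \in [set j in J | (j < x)%N] /\
    forall j, j \in [set j in J | (j < x)%N] -> (j <= y)%N.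
  by rewrite /y; case: arg_maxnP => // z zS H; split => // j /H.
move: (yS); rewrite inE => /andP [yJ yx]; exists y; split => //.
apply/eqP; rewrite -eqSS -rx /rk (cardsD1 y [set j in J | (j < x)%N]) yS add1n eqSS; apply/eqP.
apply: eq_card => j; rewrite !inE.
case: (eqVneq j y) => [->|jy] /=; first by rewrite ltnn andbF.
apply/andP/andP => [[jJ jy']|[jJ jx]]; split => //.
  exact: ltn_trans jy' yx.
have : (j <= y)%N by apply: ymax; rewrite inE jJ jx.
by rewrite leq_eqVlt => /orP [/eqP /val_inj h|//]; move: jy; rewrite h eqxx.
Qed.

Lemma pl_swap (n : nat) (J : {set 'I_n}) (s : seq nat) (m r : nat) (g : 'X_{1..n})
  (x y : 'I_n) : x \in J -> y \in J -> rk J y = r -> rk J x = r.+1 ->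
  pl J (hv s m r.+1) g = mperm (tperm y x) (pl J (hv s m r) g).
Proof.
move=> xJ yJ ry rx; apply/mnmP => i; rewrite !mnmE.
have f1 : (r.+1 < r)%N = false by rewrite ltnNge leqnSn.
have f2 : (r.+1 == r) = false by rewrite eqn_leq ltnn.
have f3 : (r == r.+1) = false by rewrite eqn_leq ltnn andbF.
case: (tpermP y x i) => [->|->|iy ix].
- by rewrite yJ xJ ry rx /hv ltnSn f1 f2.
- by rewrite xJ yJ rx ry /hv !ltnn !eqxx.
case iJ: (i \in J) => //.
have h1 : rk J i != r by rewrite -ry; apply: rk_neq => //; apply/eqP.
have h2 : rk J i != r.+1 by rewrite -rx; apply: rk_neq => //; apply/eqP.
rewrite /hv (negbTE h1) (negbTE h2); case: (ltngtP (rk J i) r) => [h|h|h].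
- by rewrite (ltn_trans h (ltnSn r)).
- by rewrite ltnS leqNgt h.
- by move: h1; rewrite -h eqxx.
Qed.

Lemma pl_cycle (R : realType) (n : nat) (J : {set 'I_n}) (s : seq nat) (m : nat)
  (g : 'X_{1..n}) (r : nat) (x : 'I_n) : x \in J -> rk J x = r ->
  D R (pl J (hv s m r) g) = (-1) ^+ r * D R (pl J (hv s m 0) g).
Proof.
elim: r x => [|r IH] x xJ rx; first by rewrite expr0 mul1r.
have [y [yJ yx ry]] := rk_pred xJ rx.
rewrite (pl_swap _ _ _ xJ yJ ry rx) Dswap; last first.
  by apply/eqP => h; move: yx; rewrite h ltnn.
by rewrite (IH y yJ ry) exprS mulN1r mulNr.
Qed.

Lemma pl_shift (n : nat) (J : {set 'I_n}) (s : seq nat) (m : nat)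
  (g : 'X_{1..n}) (x : 'I_n) : x \in J ->
  pl (J :\ x) (nth 0%N s) (upd g x m) = pl J (hv s m (rk J x)) g.
Proof.
move=> xJ; apply/mnmP => i; rewrite !mnmE !inE.
case: (eqVneq i x) => [->|ix] /=; first by rewrite xJ /hv ltnn eqxx.
case iJ: (i \in J) => //=.
rewrite /hv; case: (ltngtP i x) => [h|h|h].
- have e : rk (J :\ x) i = rk J i by rewrite (rkD1 i xJ) ltnNge (ltnW h).
  by rewrite e (rk_lt iJ h).
- have e : rk J i = (rk (J :\ x) i).+1 by rewrite (rkD1 i xJ) h.
  have l := rk_lt xJ h.
  by rewrite ltnNge (ltnW l) /= (gtn_eqF l) e.
- by move: ix; rewrite (val_inj h) eqxx.
Qed.

Lemma pl_cons (n : nat) (J : {set 'I_n}) (s : seq nat) (m : nat) (g : 'X_{1..n}) :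
  pl J (nth 0%N (m :: s)) g = pl J (hv s m 0) g.
Proof. by apply/mnmP => i; rewrite !mnmE /hv; case: (rk J i). Qed.

Lemma itercoef (R : realType) (n : nat) (x : 'I_n) (m : nat) (p : {mpoly R[n]})
  (g : 'X_{1..n}) : g x = 0%N ->
  (iter m (mderiv x) p)@_g = p@_(upd g x m) *+ m`!.
Proof.
move=> gx; rewrite -mderivn_iter mcoeff_mderivm; congr (_@__ *+ _).
  apply/mnmP => i; rewrite mnmDE mulmnE mnm1E !mnmE.
  case: (eqVneq i x) => [->|ix]; first by rewrite ?eqxx ?mul1n gx addn0.
  by rewrite ?(eq_sym x) ?(negbTE ix) ?mul0n ?add0n.
rewrite (bigD1 x) //= big1 ?muln1.
  by rewrite mnmDE !mulmnE mnm1E eqxx gx addn0 mul1n ffactnn.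
by move=> i ix; rewrite mulmnE mnm1E eq_sym (negbTE ix) mul0n ffactn0.
Qed.

Lemma dj_coef (R : realType) (n : nat) (m : nat) (w : Defs.form R n) (J : {set 'I_n}) :
  dj m w J = \sum_(l in J) wsign R l (J :\ l) *: iter m (mderiv l) (w (J :\ l)).
Proof.
rewrite /dj ffunE (eq_bigr _ (fun I _ => big_mkcond _ _)) /= exchange_big /=.
rewrite [RHS]big_mkcond; apply: eq_bigr => l _.
case: (boolP (l \in J)) => lJ.
  rewrite (bigD1 (J :\ l)) //= !inE eqxx /= setD1K // eqxx /= big1 ?addr0 //.
  move=> I IJ; case: ifP => // /andP [lI /eqP e]; move: IJ.
  by rewrite -e setU1K ?eqxx.
rewrite big1 // => I _; case: ifP => // /andP [_ /eqP e].
by move: lJ; rewrite -e setU11.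
Qed.

Fixpoint Kf (s : seq nat) : nat :=
  if s is m :: s' then ((size s').+1 * m`! * Kf s')%N else 1%N.

Lemma Kf_gt0 (s : seq nat) : (0 < Kf s)%N.
Proof. by elim: s => //= m s IH; rewrite !muln_gt0 fact_gt0 IH. Qed.

Lemma omega_coef (R : realType) (n : nat) (s : seq nat) :
  forall (J : {set 'I_n}) (g : 'X_{1..n}), (forall i, i \in J -> g i = 0%N) ->
  ((omega R n s) J)@_g =
    if #|J| == size s then (Kf s)%:R * D R (pl J (nth 0%N s) g) else 0.
Proof.
elim: s => [|m s IH] J g gJ.
  rewrite /omega /= /Delta ffunE cards_eq0; case: eqP => [->|_]; last by rewrite mcoeff0.
  rewrite mul1r /D; congr (_@__); apply/mnmP => i; rewrite mnmE inE //.
rewrite /omega /= -/(omega R n s) dj_coef raddf_sum /=.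
have gl : forall l, l \in J -> forall i, i \in J :\ l -> upd g l m i = 0%N.
  move=> l lJ i; rewrite !inE mnmE => /andP [/negbTE -> iJ]; exact: gJ.
have term : forall l, l \in J ->
    (wsign R l (J :\ l) *: iter m (mderiv l) (omega R n s (J :\ l)))@_g =
    if #|J| == (size s).+1 then
      (Kf s)%:R * D R (pl J (nth 0%N (m :: s)) g) *+ m`! else 0.
  move=> l lJ; apply: (etrans (mcoeffZ _ _ _)).
  have cJ : #|J| = (#|J :\ l|).+1 by rewrite (cardsD1 l J) lJ.
  rewrite itercoef ?gJ // (IH _ _ (gl l lJ)).
  have e2 : (#|J| == (size s).+1) = (#|J :\ l| == size s) by rewrite cJ.
  rewrite e2.
  case: ifP => _; last by rewrite mul0rn mulr0.
  rewrite (pl_shift _ _ _ lJ) (pl_cycle _ _ _ _ lJ (erefl _)) pl_cons.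
  rewrite /wsign (rkD1 l lJ) ltnn add0n /rk.
  rewrite mulrnAr; congr (_ *+ _).
  by rewrite mulrCA [X in _ * X]mulrA -exprD -signr_odd oddD addbb mul1r.
rewrite (eq_bigr _ term) sumr_const.
case: ifP => HJ; last by rewrite mul0rn.
rewrite -mulrnA -mulrnAl -[(Kf s)%:R *+ _]mulr_natr -natrM.
congr (_%:R * _).
have cJ : #|J| = (size s).+1 by apply/eqP.
by rewrite cJ mulnC [(m`! * _)%N]mulnC.
Qed.

Lemma card_lt_ord (n i : nat) : (i <= n)%N -> #|[set j : 'I_n | (j < i)%N]| = i.
Proof.
move=> le_in.
have -> : [set j : 'I_n | (j < i)%N] = [set widen_ord le_in j | j : 'I_i].
  apply/setP => j; rewrite inE; apply/idP/imsetP => [ji|[k _ ->]] /=.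
    by exists (Ordinal ji) => //; apply: val_inj.
  exact: ltn_ord.
have winj : injective (widen_ord le_in).
  by move=> a b h; apply: val_inj; exact: (congr1 val h).
have := card_imset (mem 'I_i) winj.
by rewrite card_ord.
Qed.

Lemma rk_Ik (n k : nat) (i : 'I_n) : (i < k)%N ->
  rk [set j : 'I_n | (j < k)%N] i = i.
Proof.
move=> ik; rewrite /rk -[RHS](card_lt_ord (ltnW (ltn_ord i))).
apply: eq_card => j; rewrite !inE; apply/andP/idP => [[]//|ji]; split=> //.
exact: ltn_trans ji ik.
Qed.

Definition Cs (n : nat) (s : seq nat) := [seq v <- iota 0 n | v \notin s].

Definition gs (n : nat) (s : seq nat) : 'X_{1..n} :=
  [multinom (if (i < size s)%N then 0%N else nth 0%N (Cs n s) (i - size s)) | i < n].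

Lemma pl_Ik (n : nat) (s t : seq nat) : size t = size s ->
  pl [set j : 'I_n | (j < size s)%N] (nth 0%N t) (gs n s) =
  [multinom nth 0%N (t ++ Cs n s) i | i < n].
Proof.
move=> st; apply/mnmP => i; rewrite !mnmE inE nth_cat st.
case: ifP => ik; first by rewrite (@rk_Ik n (size s) i ik).
by rewrite ik.
Qed.

Lemma adm_uniq (n : nat) (s : seq nat) : admissible n s -> uniq s.
Proof.
case/andP => so _; apply: (sorted_uniq _ _ so).
  by move=> a b c ba cb; exact: ltn_trans cb ba.
by move=> a; rewrite ltnn.
Qed.

Lemma adm_lt (n : nat) (s : seq nat) : admissible n s -> forall v, v \in s -> (v < n)%N.
Proof.
case/andP => _ /allP H v /H /andP [h1 h2].
apply: (leq_ltn_trans h2); rewrite ltn_predL.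
by apply: (leq_trans h1); apply: (leq_trans h2); apply: leq_pred.
Qed.

Lemma perm_sCs (n : nat) (s : seq nat) : admissible n s ->
  perm_eq (s ++ Cs n s) (iota 0 n).
Proof.
move=> ad; apply: (perm_trans _ (permEl (perm_filterC (mem s) (iota 0 n)))).
rewrite perm_cat2r.
apply: uniq_perm; rewrite ?(adm_uniq ad) ?filter_uniq ?iota_uniq // => v.
rewrite mem_filter /=; apply/idP/andP => [vs|[]//]; split=> //.
by rewrite mem_iota add0n (adm_lt ad).
Qed.

Lemma diag_nz (R : realType) (n : nat) (s : seq nat) : admissible n s ->
  D R [multinom nth 0%N (s ++ Cs n s) i | i < n] != 0.
Proof.
move=> ad; have pe := perm_sCs ad.
have u : uniq (s ++ Cs n s) by rewrite (perm_uniq pe) iota_uniq.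
have sz : size (s ++ Cs n s) = n by rewrite (perm_size pe) size_iota.
have fP : forall i : 'I_n, (nth 0%N (s ++ Cs n s) i < n)%N.
  move=> i; have : nth 0%N (s ++ Cs n s) i \in iota 0 n.
    by rewrite -(perm_mem pe) mem_nth // sz.
  by rewrite mem_iota add0n.
pose f i := Ordinal (fP i).
have finj : injective f.
  move=> i j /(congr1 val) /= h; apply: val_inj => /=.
  by apply/eqP; rewrite -(nth_uniq 0%N _ _ u) ?sz // h.
have -> : [multinom nth 0%N (s ++ Cs n s) i | i < n] = monoS ((perm finj)^-1)%g.
  by apply/mnmP => i; rewrite !mnmE invgK permE.
exact: Dnz.
Qed.

Lemma offdiag (R : realType) (n : nat) (s t : seq nat) : admissible n s ->
  admissible n t -> size t = size s ->
  D R [multinom nth 0%N (t ++ Cs n s) i | i < n] != 0 -> t = s.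
Proof.
move=> ads adt st /Dex [sg E].
have szC : (size s + size (Cs n s))%N = n.
  by rewrite -size_cat (perm_size (perm_sCs ads)) size_iota.
have u : uniq (t ++ Cs n s).
  apply/(uniqP 0%N) => i j; rewrite !inE size_cat st szC => hi hj h.
  have := congr1 (fun m : 'X_{1..n} => m (Ordinal hi)) E.
  have := congr1 (fun m : 'X_{1..n} => m (Ordinal hj)) E.
  rewrite /= !mnmE /= h => -> /val_inj /perm_inj.
  by move/(congr1 val).
have sub : {subset t <= s}.
  move=> v vt; move: u; rewrite cat_uniq => /and3P [_ /hasPn H _].
  apply/negPn/negP => vs.
  have : v \in Cs n s by rewrite mem_filter vs mem_iota add0n (adm_lt adt).
  by move/H; rewrite vt.
have [_ eqts] := uniq_min_size (adm_uniq adt) sub (eq_leq (esym st)).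
apply: (sorted_eq _ _ (proj1 (andP adt)) (proj1 (andP ads))).
- by move=> a b c ba cb; exact: ltn_trans cb ba.
- by move=> a b /andP [h1 h2]; move: (ltn_trans h1 h2); rewrite ltnn.
by apply: uniq_perm; rewrite ?(adm_uniq adt) ?(adm_uniq ads).
Qed.

Lemma ffunZ' (R : realType) (n : nat) (c : R) (w : Defs.form R n) J :
  (c *: w) J = c *: w J.
Proof. by rewrite ffunE. Qed.

Theorem lemma12 (R : realType) (n : nat) (L : seq (seq nat)) (c : seq nat -> R) :
  uniq L -> all (admissible n) L ->
  \sum_(s <- L) c s *: omega R n s = 0 ->
  forall s, s \in L -> c s = 0.
Proof.
move=> uL adL H s sL.
have ads : admissible n s := allP adL s sL.
have szs : (size s <= n)%N.
  by rewrite -(size_iota 0 n) -(perm_size (perm_sCs ads)) size_cat leq_addr.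
pose J := [set j : 'I_n | (j < size s)%N].
have gJ : forall i, i \in J -> gs n s i = 0%N by move=> i; rewrite inE mnmE => ->.
have cJ : #|J| = size s by rewrite card_lt_ord.
have coef : forall t, t \in L -> ((omega R n t) J)@_(gs n s) =
    if t == s then (Kf s)%:R * D R [multinom nth 0%N (s ++ Cs n s) i | i < n] else 0.
  move=> t tL; rewrite omega_coef // cJ.
  case: (eqVneq t s) => [->|ts]; first by rewrite eqxx pl_Ik.
  case: ifP => // /eqP st; rewrite pl_Ik //.
  set Dv := D R _; case: (eqVneq Dv 0) => [->|Dn]; first by rewrite mulr0.
  by move: ts; rewrite (offdiag ads (allP adL t tL) (esym st) Dn) eqxx.
have := congr1 (fun w : Defs.form R n => (w J)@_(gs n s)) H.
rewrite /= sum_ffunE raddf_sum (bigD1_seq s) //= big1_seq ?addr0; last first.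
  move=> t /andP [ts tL]; rewrite ffunZ'; apply: (etrans (mcoeffZ _ _ _)).
  by rewrite coef // (negbTE ts) mulr0.
rewrite ffunZ' ffunE mcoeff0.
have -> : (c s *: omega R n s J)@_(gs n s) = c s * (omega R n s J)@_(gs n s).
  exact: mcoeffZ.
rewrite coef // eqxx => /eqP; rewrite mulf_eq0 => /orP [/eqP //|].
by rewrite mulf_eq0 pnatr_eq0 (negbTE (diag_nz R ads)) orbF eqn0Ngt Kf_gt0.
Qed.
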